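(* There exist a finite candidate set $C$, a tie-breaking order $>$ on $C$, a preference profile $V$, and for each GS-manipulator $i$ at $V$ under 4-Approval a minimal GS-manipulation $m_i$ of $i$, such that the GS-game in which each GS-manipulator $i$ has action set $A_i=\{v_i,m_i\}$ has no Nash equilibrium in pure strategies.
   Context: Each voter $i$ has a strict linear order $v_i$ over $C$; $\mathrm{top}_k(v)$ is the set of the $k$ highest-ranked candidates of $v$. $k$-Approval: each candidate gets one point from each voter ranking her among his top $k$; the highest score wins, ties broken in favour of the candidate highest in the fixed strict linear order $>$. Write $\mathcal{R}$ for the rule and $(V_{-i},v_i')$ for $V$ with $v_i$ replaced by $v_i'$. A GS-manipulation of voter $i$ at $V$ is a vote $v_i'$ such that $i$ strictly prefers $\mathcal{R}(V_{-i},v_i')$ to $\mathcal{R}(V)$ and for every vote $v_i''$ either $\mathcal{R}(V_{-i},v_i'')=\mathcal{R}(V_{-i},v_i')$ or $i$ strictly prefers $\mathcal{R}(V_{-i},v_i')$ to $\mathcal{R}(V_{-i},v_i'')$; it is in favour of $x=\mathcal{R}(V_{-i},v_i')$; $i$ is a GS-manipulator if he has one. GS-game for $V$: players are all GS-manipulators at $V$; player $i$'s action set contains $v_i$ and some of his GS-manipulations; non-players vote sincerely; players compare action profiles via their preferences over the resulting winners. Pure Nash equilibrium: no player can obtain a strictly preferred winner by switching to another action of his own action set. Let $w=\mathcal{R}(V)$. A GS-manipulation $v_i'$ in favour of $x$ is of Type 1 if $w,x\notin\mathrm{top}_k(v_i)$ and of Type 2 if $w,x\in\mathrm{top}_k(v_i)$.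 A Type 1 GS-manipulation in favour of $x$ is minimal if $\mathrm{top}_k(v_i')$ is obtained from $\mathrm{top}_k(v_i)$ by removing the $k$-th ranked candidate of $v_i$ and adding $x$. A Type 2 GS-manipulation $v_i'$ is minimal if $\ell=|\mathrm{top}_k(v_i)\setminus\mathrm{top}_k(v_i')|$ is the smallest possible among GS-manipulations of $i$ and $\mathrm{top}_k(v_i')\setminus\mathrm{top}_k(v_i)$ consists of the $\ell$ candidates ranked highest by $v_i$ among those outside $\mathrm{top}_k(v_i)$. *)

(* Defs.v *)
From mathcomp Require Import all_boot.
Set Implicit Arguments. Unset Strict Implicit. Unset Printing Implicit Defensive.

Section Voting.
Variable C : finType.

(* A strict linear order over C is represented as the sequence of all
   candidates from highest-ranked to lowest-ranked. *)
Definition linorder (v : seq C) : Prop := perm_eq v (enum C).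

Definition prefers (v : seq C) (x y : C) : bool := index x v < index y v.

Definition topk (k : nat) (v : seq C) : {set C} := [set x | index x v < k].

Variable n : nat.
Definition profile := 'I_n -> seq C.

Definition upd (V : profile) (i : 'I_n) (v : seq C) : profile :=
  fun j => if j == i then v else V j.

Variables (k : nat) (tb : seq C) (x0 : C).
(* tb : the tie-breaking order >, listed from highest to lowest;
   x0 : an arbitrary default element (irrelevant when tb is a linear order). *)

Definition score (V : profile) (x : C) : nat := #|[set i | x \in topk k (V i)]|.

Definition winner (V : profile) : C :=
  odflt x0 [pick x | [forall y, (score V y < score V x) ||
                        ((score V y == score V x) && (index x tb <= index y tb))]].

Definition is_GSmanip (V : profile) (i : 'I_n) (v' : seq C) : Prop :=
  linorder v' /\
  prefers (V i) (winner (upd V i v')) (winner V) /\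
  forall v'', linorder v'' ->
    winner (upd V i v'') = winner (upd V i v') \/
    prefers (V i) (winner (upd V i v')) (winner (upd V i v'')).

Definition is_GSmanipulator (V : profile) (i : 'I_n) : Prop :=
  exists v', is_GSmanip V i v'.

Definition type1 (V : profile) (i : 'I_n) (v' : seq C) : Prop :=
  winner V \notin topk k (V i) /\ winner (upd V i v') \notin topk k (V i).

Definition type2 (V : profile) (i : 'I_n) (v' : seq C) : Prop :=
  winner V \in topk k (V i) /\ winner (upd V i v') \in topk k (V i).

Definition minimal_type1 (V : profile) (i : 'I_n) (v' : seq C) : Prop :=
  type1 V i v' /\
  topk k v' = winner (upd V i v') |: (topk k (V i) :\ nth x0 (V i) k.-1).

Definition minimal_type2 (V : profile) (i : 'I_n) (v' : seq C) : Prop :=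
  type2 V i v' /\
  let ell := #|topk k (V i) :\: topk k v'| in
  (forall v'', is_GSmanip V i v'' -> ell <= #|topk k (V i) :\: topk k v''|) /\
  topk k v' :\: topk k (V i) = [set y | (y \notin topk k (V i)) && (index y (V i) < k + ell)].

Definition minimal_GSmanip (V : profile) (i : 'I_n) (v' : seq C) : Prop :=
  is_GSmanip V i v' /\ (minimal_type1 V i v' \/ minimal_type2 V i v').

End Voting.

(* Main.v *)
Require Import Defs.
From mathcomp Require Import all_boot.
From mathcomp Require Import zify.
Set Implicit Arguments. Unset Strict Implicit. Unset Printing Implicit Defensive.

Definition C := 'I_7.
Definition x0 : C := @Ordinal 7 0 isT.
Definition cands : seq C :=
  [:: x0; @Ordinal 7 1 isT; @Ordinal 7 2 isT; @Ordinal 7 3 isT;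
      @Ordinal 7 4 isT; @Ordinal 7 5 isT; @Ordinal 7 6 isT].
Definition c (m : nat) : C := nth x0 cands m.

Lemma cands_all (x : C) : x \in cands.
Proof. by case: x => [[|[|[|[|[|[|[|m]]]]]]] Hm]. Qed.

Lemma cands_perm : perm_eq cands (enum C).
Proof.
apply: uniq_perm => //; first exact: enum_uniq.
by move=> x; rewrite mem_enum cands_all.
Qed.

Definition sc (F : nat -> seq C) n (x : C) := count (fun j => index x (F j) < 4) (iota 0 n).
Definition isW (F : nat -> seq C) n (y : C) :=
  all (fun z => (sc F n z < sc F n y) ||
                ((sc F n z == sc F n y) && (index y cands <= index z cands))) cands.
Definition winC (F : nat -> seq C) n := odflt x0 (ohead (filter (isW F n) cands)).
Definition updN (F : nat -> seq C) (i : nat) (v : seq C) : nat -> seq C :=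
  fun j => if j == i then v else F j.

Fixpoint allbits (n : nat) : seq (seq bool) :=
  if n is n'.+1 then [seq b :: s | b <- [:: true; false], s <- allbits n'] else [:: [::]].

Lemma allbitsP bs : bs \in allbits (size bs).
Proof.
elim: bs => [|b bs IH] //=.
have inj (b0 : bool) : injective (cons b0) by move=> s t [].
case: b; rewrite /= !mem_cat; [apply/orP; left|apply/orP; right; apply/orP; left]; by rewrite (mem_map (inj _)).
Qed.

Definition eqtop (s t : seq C) := forall x, (index x s < 4) = (index x t < 4).

Lemma cnt (T : finType) (P : pred T) : #|[set x | P x]| = count P (enum T).
Proof.
rewrite -sum1_card -sum1_count. rewrite big_mkcond /= [RHS]big_mkcond /= big_enum_cond /=.
 apply: eq_bigr => x _. by rewrite inE.
Qed.

Lemma cntC (P : pred C) : #|[set x | P x]| = count P cands.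
Proof. by rewrite cnt; apply/permP; rewrite perm_sym cands_perm. Qed.

Lemma scoreE n (V : 'I_n -> seq C) F :
  (forall j : 'I_n, eqtop (V j) (F (val j))) ->
  forall x, score 4 V x = sc F n x.
Proof.
move=> H x; rewrite /score.
transitivity #|[set j : 'I_n | index x (F (val j)) < 4]|.
  by apply: eq_card => j; rewrite !inE H.
by rewrite cnt /sc -val_enum_ord count_map.
Qed.

Lemma winnerE n (V : 'I_n -> seq C) F y :
  (forall j : 'I_n, eqtop (V j) (F (val j))) -> isW F n y ->
  winner 4 cands x0 V = y.
Proof.
move=> H Hy; rewrite /winner.
have Hy' z : (sc F n z < sc F n y) ||
                ((sc F n z == sc F n y) && (index y cands <= index z cands)).
  by move/allP: Hy; apply; apply: cands_all.
case: pickP => [z Hz | Hn] /=.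
  have Hz' := forallP Hz y. rewrite !(scoreE H) in Hz'.
  have Hyz := Hy' z.
  have E : index z cands = index y cands.
    move: Hz' Hyz; case: ltngtP => //= _; case: ltngtP => //.
  by rewrite -(nth_index x0 (cands_all z)) E nth_index // cands_all.
have := Hn y; rewrite /=; move/negbT/negP; case.
by apply/forallP => z; rewrite !(scoreE H).
Qed.

Lemma eqtop_upd n (V : 'I_n -> seq C) F i v w :
  (forall j : 'I_n, eqtop (V j) (F (val j))) -> eqtop v w ->
  forall j : 'I_n, eqtop (upd V i v j) (updN F (val i) w (val j)).
Proof.
move=> H Hv j; rewrite /upd /updN.
have -> : (val j == val i) = (j == i) by [].
by case: (j == i).
Qed.

Lemma tops_rep (v : seq C) : linorder v ->
  let bs := [seq x \in take 4 v | x <- cands] in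
  [/\ bs \in allbits 7, count id bs = 4 & eqtop v (mask bs cands)].
Proof.
move=> Hv bs.
have Hsz : size v = 7 by rewrite (perm_size Hv) size_enum_ord.
have Hu : uniq v by rewrite (perm_uniq Hv) enum_uniq.
have Hsb : size bs = 7 by rewrite size_map.
have Hmask : mask bs cands = filter (mem (take 4 v)) cands by rewrite filter_mask.
have Hcnt : count (mem (take 4 v)) cands = 4.
  rewrite -size_filter.
  have P : perm_eq (filter (mem (take 4 v)) cands) (take 4 v).
    apply: uniq_perm; first by rewrite filter_uniq.
      by apply: take_uniq.
    by move=> x; rewrite mem_filter cands_all andbT.
  by rewrite (perm_size P) size_take Hsz.
split.
- by rewrite -Hsb allbitsP.
- by rewrite count_map.
- move=> x.
  have Hs : size (mask bs cands) = 4 by rewrite Hmask size_filter.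
  rewrite -(in_take_leq x (s:=v)) ?Hsz //.
  have := index_mem x (mask bs cands); rewrite Hs => ->.
  by rewrite Hmask mem_filter cands_all andbT.
Qed.

Definition Vn (j : nat) : seq C := map c (nth [::]
  [:: [:: 4;3;6;5;0;1;2]; [:: 2;5;0;6;4;1;3]; [:: 2;3;6;5;4;1;0]] j).
Definition Mn (j : nat) : seq C := map c (nth [::]
  [:: [:: 4;3;6;0;5;1;2]; [:: 2;0;4;1;5;6;3]; [:: 2;3;4;1;6;5;0]] j).
Definition Xn (i : nat) := winC (updN Vn i (Mn i)) 3.
Definition ell (i : nat) := count (fun x => (index x (Vn i) < 4) && ~~ (index x (Mn i) < 4)) cands.

Definition chk_basic :=
  uniq cands && isW Vn 3 (winC Vn 3) &&
  all (fun i => isW (updN Vn i (Mn i)) 3 (Xn i) && prefers (Vn i) (Xn i) (winC Vn 3)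
       && perm_eq (Vn i) cands && perm_eq (Mn i) cands
       && (index (winC Vn 3) (Vn i) < 4) && (index (Xn i) (Vn i) < 4)
       && all (fun y => ((index y (Mn i) < 4) && ~~ (index y (Vn i) < 4)) ==
                        (~~ (index y (Vn i) < 4) && (index y (Vn i) < 4 + ell i))) cands)
      (iota 0 3).

Definition chk_opt :=
  all (fun i => all (fun bs => (count id bs == 4) ==>
     (let F := updN Vn i (mask bs cands) in
      isW F 3 (winC F 3) && ((winC F 3 == Xn i) || prefers (Vn i) (Xn i) (winC F 3))
      && ((winC F 3 == Xn i) ==>
          (ell i <= count (fun x => (index x (Vn i) < 4) && ~~ (index x (mask bs cands) < 4)) cands))))
    (allbits 7)) (iota 0 3).

Definition chk_NE :=
  all (fun bits => has (fun i =>
     let F := fun j => if nth false bits j then Mn j else Vn j in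
     isW F 3 (winC F 3) && has (fun a => let G := updN F i a in
        isW G 3 (winC G 3) && prefers (Vn i) (winC G 3) (winC F 3)) [:: Vn i; Mn i])
    (iota 0 3)) (allbits 3).

Lemma chk_basic_ok : chk_basic. Proof. vm_compute. reflexivity. Qed.
Lemma chk_opt_ok : chk_opt. Proof. vm_compute. reflexivity. Qed.
Lemma chk_NE_ok : chk_NE. Proof. vm_compute. reflexivity. Qed.

Definition V : 'I_3 -> seq C := fun i => Vn (val i).
Definition M : 'I_3 -> seq C := fun i => Mn (val i).

Lemma H0 : forall j : 'I_3, eqtop (V j) (Vn (val j)).
Proof. by []. Qed.

Lemma basic_i (i : 'I_3) :
  [/\ isW (updN Vn i (Mn i)) 3 (Xn i), prefers (Vn i) (Xn i) (winC Vn 3),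
      perm_eq (Vn i) cands, perm_eq (Mn i) cands &
   [/\ index (winC Vn 3) (Vn i) < 4, index (Xn i) (Vn i) < 4 &
      all (fun y => ((index y (Mn i) < 4) && ~~ (index y (Vn i) < 4)) ==
                        (~~ (index y (Vn i) < 4) && (index y (Vn i) < 4 + ell i))) cands]].
Proof.
have Hi : val i \in iota 0 3 by rewrite mem_iota ltn_ord.
have := chk_basic_ok; rewrite /chk_basic => /andP[_ /allP/(_ _ Hi)].
by case/andP=> /andP[/andP[/andP[/andP[/andP[-> ->] ->] ->] ->] ->] ->.
Qed.

Lemma wV : winner 4 cands x0 V = winC Vn 3.
Proof.
apply: (winnerE H0).
by have := chk_basic_ok; rewrite /chk_basic => /andP[/andP[_ ->] _].
Qed.

Lemma wM (i : 'I_3) : winner 4 cands x0 (upd V i (M i)) = Xn i.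
Proof.
apply: (winnerE (eqtop_upd i H0 (w := Mn i) _)) => //.
by case: (basic_i i).
Qed.

Lemma lin_of (s : seq C) : perm_eq s cands -> linorder s.
Proof. by move=> H; apply: perm_trans H cands_perm. Qed.

Lemma opt_i (i : 'I_3) bs : bs \in allbits 7 -> count id bs = 4 ->
      isW (updN Vn i (mask bs cands)) 3 (winC (updN Vn i (mask bs cands)) 3) && ((winC (updN Vn i (mask bs cands)) 3 == Xn i) || prefers (Vn i) (Xn i) (winC (updN Vn i (mask bs cands)) 3))
      && ((winC (updN Vn i (mask bs cands)) 3 == Xn i) ==>
          (ell i <= count (fun x => (index x (Vn i) < 4) && ~~ (index x (mask bs cands) < 4)) cands)).
Proof.
move=> Hb Hc.
have Hi : val i \in iota 0 3 by rewrite mem_iota ltn_ord.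
have := chk_opt_ok; rewrite /chk_opt => /allP/(_ _ Hi)/allP/(_ _ Hb).
by rewrite Hc eqxx.
Qed.

Lemma manipM (i : 'I_3) : is_GSmanip 4 cands x0 V i (M i).
Proof.
case: (basic_i i) => _ Hpref _ HpM _.
split; first exact: lin_of.
split; first by rewrite wM wV.
move=> v Hv.
have [Hb Hc He] := tops_rep Hv.
case/andP: (opt_i i Hb Hc) => /andP[HW Hor] _.
have -> : winner 4 cands x0 (upd V i v) =
   winC (updN Vn i (mask [seq x \in take 4 v | x <- cands] cands)) 3.
  exact: (winnerE (eqtop_upd i H0 He)).
rewrite wM; case/orP: Hor => [/eqP ->|->]; by [left|right].
Qed.

Lemma card_diff (s t : seq C) :
  #|topk 4 s :\: topk 4 t| = count (fun x => (index x s < 4) && ~~ (index x t < 4)) cands.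
Proof.
rewrite -cntC; apply: eq_card => x; by rewrite /topk !inE andbC.
Qed.

Lemma minM (i : 'I_3) : minimal_GSmanip 4 cands x0 V i (M i).
Proof.
split; first exact: manipM.
right.
case: (basic_i i) => HWi Hpref _ _ [Hw Hx Hall].
split; first by split; rewrite /topk in_set ?wV ?wM; [exact: Hw|exact: Hx].
rewrite card_diff.
have -> : count (fun x => (index x (V i) < 4) && ~~ (index x (M i) < 4)) cands = ell i by [].
split.
- move=> v Hgs.
  have Hv := Hgs.1.
  have [Hb Hc He] := tops_rep Hv.
  case/andP: (opt_i i Hb Hc) => /andP[HW _] Himp.
  have Ew : winner 4 cands x0 (upd V i v) =
     winC (updN Vn i (mask [seq x \in take 4 v | x <- cands] cands)) 3.
    exact: (winnerE (eqtop_upd i H0 He)).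
  have EX : winner 4 cands x0 (upd V i v) = Xn i.
    have A := Hgs.2.2 (M i) (manipM i).1.
    have B := (manipM i).2.2 v Hv.
    rewrite wM in A B.
    case: A => [-> //|A]; case: B => [-> //|B].
    move: A B; rewrite /prefers; lia.
  rewrite card_diff.
  have -> : count (fun x => (index x (V i) < 4) && ~~ (index x v < 4)) cands =
     count (fun x => (index x (Vn i) < 4) && ~~ (index x (mask [seq x \in take 4 v | x <- cands] cands) < 4)) cands.
    by apply: eq_count => x; rewrite He.
  by move: Himp; rewrite -Ew EX eqxx.
- apply/setP => y; rewrite /topk !inE.
  by have := allP Hall y (cands_all y); move/eqP; rewrite andbC.
Qed.

Theorem mainTheorem4 :
  exists (C : finType) (x0 : C) (tb : seq C) (n : nat) (V : 'I_n -> seq C)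
         (m : 'I_n -> seq C),
    linorder tb /\
    (forall i, linorder (V i)) /\
    (forall i, is_GSmanipulator 4 tb x0 V i -> minimal_GSmanip 4 tb x0 V i (m i)) /\
    ~ (exists sigma : 'I_n -> seq C,
          (forall i, sigma i = V i \/ (is_GSmanipulator 4 tb x0 V i /\ sigma i = m i)) /\
          (forall i, is_GSmanipulator 4 tb x0 V i ->
             forall a, a = V i \/ a = m i ->
               ~ prefers (V i) (winner 4 tb x0 (upd sigma i a)) (winner 4 tb x0 sigma))).
Proof.
exists C, x0, cands, 3, V, M.
split; first exact: cands_perm.
split; first by move=> i; case: (basic_i i) => _ _ H _ _; apply: lin_of.
split; first by move=> i _; apply: minM.
case=> sigma [Hs HNE].
set bits := [seq sigma (inord j) == Mn j | j <- iota 0 3].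
have Hb : bits \in allbits 3 by rewrite -[3]/(size bits) allbitsP.
have := chk_NE_ok; rewrite /chk_NE => /allP/(_ _ Hb)/hasP[i Hi].
set F := fun j => if nth false bits j then Mn j else Vn j.
move=> /andP[HWF /hasP[a Ha /andP[HWG Hpr]]].
have HF : forall j : 'I_3, eqtop (sigma j) (F (val j)).
  move=> j x; rewrite /F /bits (nth_map 0) ?size_iota ?ltn_ord // nth_iota ?ltn_ord //.
  rewrite add0n inord_val.
  case: eqP => [-> //|Hne].
  by case: (Hs j) => [-> //|[_ E]].
have Hi3 : i < 3 by move: Hi; rewrite mem_iota.
pose io : 'I_3 := Ordinal Hi3.
apply: (HNE io (ex_intro _ (M io) (manipM io)) a).
  by move: Ha; rewrite !inE => /orP[/eqP->|/eqP->]; [left|right].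
rewrite (winnerE HF HWF).
by rewrite (winnerE (eqtop_upd io HF (w := a) (fun x => erefl)) HWG).
Qed.
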